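(* Let $G$ and $H$ be finite abelian groups, written additively, of the same even order $k>2$, let $f:G\to H$ be semi-planar, and suppose $S(G,H;f)$ splits into two substructures $S_1$ and $S_2$ with $\mathcal{L}(0,0)\in S_1$. For $i=1,2$ let $P_0^i=\{b\in H : \mathcal{L}(0,b)\in S_i\}$. Then $P_0^1$ is a subgroup of $H$ of index $2$, and $P_0^2$ is its (non-trivial) coset $H\setminus P_0^1$.
   Context: A function $f:G\to H$ is semi-planar if for every non-identity $a\in G$ and every $y\in H$, the equation $f(x+a)-f(x)=y$ has either $0$ or $2$ solutions $x\in G$. The incidence structure $S(G,H;f)$ has points $(x,y)\in G\times H$ and lines $\mathcal{L}(a,b)$ for $(a,b)\in G\times H$, with $(x,y)$ incident with $\mathcal{L}(a,b)$ iff $y=f(x-a)+b$. Its incidence graph is the bipartite graph on points and lines with an edge for each incident pair. $S(G,H;f)$ splits into two substructures $S_1,S_2$ if its incidence graph has exactly two connected components; $S_1,S_2$ are the incidence structures formed by the points and lines of the two components, and $\mathcal{L}(a,b)\in S_i$ means the line lies in component $S_i$. *)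

(* Defs.v *)
From HB Require Import structures.
From mathcomp Require Import all_boot all_order all_algebra all_fingroup.
Set Implicit Arguments. Unset Strict Implicit. Unset Printing Implicit Defensive.
Import GRing.Theory.
Local Open Scope ring_scope.

Definition semi_planar (G H : finZmodType) (f : G -> H) : Prop :=
  forall (a : G) (y : H), a != 0 ->
    #|[set x : G | f (x + a) - f x == y]| \in [:: 0%N; 2%N].

(* Vertices of the incidence graph of S(G,H;f):
   inl (x,y) = point (x,y), inr (a,b) = line L(a,b). *)
Definition vertex (G H : finZmodType) : finType := ((G * H) + (G * H))%type.

Definition incident (G H : finZmodType) (f : G -> H) (p l : G * H) : bool :=
  p.2 == f (p.1 - l.1) + l.2.

Definition inc_adj (G H : finZmodType) (f : G -> H) : rel (vertex G H) :=
  fun u v => match u, v with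
             | inl p, inr l => incident f p l
             | inr l, inl p => incident f p l
             | _, _ => false
             end.

Definition line_v (G H : finZmodType) (a : G) (b : H) : vertex G H := inr (a, b).

(* S(G,H;f) splits into two substructures: the incidence graph has exactly
   two connected components. *)
Definition splits_in_two (G H : finZmodType) (f : G -> H) : Prop :=
  n_comp (connect (@inc_adj G H f)) (@predT (vertex G H)) = 2%N.

Definition P01 (G H : finZmodType) (f : G -> H) : {set H} :=
  [set b : H | connect (@inc_adj G H f) (line_v 0 0) (line_v 0 b)].

Definition P02 (G H : finZmodType) (f : G -> H) : {set H} :=
  [set b : H | ~~ connect (@inc_adj G H f) (line_v 0 0) (line_v 0 b)].

(* Main.v *)
Require Import Defs.
From HB Require Import structures.
From mathcomp Require Import all_boot all_order all_algebra all_fingroup.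
From mathcomp Require Import zify.
Import GRing.Theory.
Import FinRing.Theory.

Section Aux.
Variables (G H : finZmodType) (f : G -> H).
Local Open Scope ring_scope.

Definition tr (g : G) (h : H) (v : vertex G H) : vertex G H :=
  match v with
  | inl p => inl (p.1 + g, p.2 + h)
  | inr l => inr (l.1 + g, l.2 + h)
  end.

Lemma inc_tr g h p l : incident f (p.1 + g, p.2 + h) (l.1 + g, l.2 + h) = incident f p l.
Proof.
rewrite /incident /=.
have -> : p.1 + g - (l.1 + g) = p.1 - l.1 by rewrite opprD addrACA subrr addr0.
by rewrite addrA (inj_eq (addIr h)).
Qed.

Lemma adj_tr g h u v : inc_adj f (tr g h u) (tr g h v) = inc_adj f u v.
Proof. by case: u => [p|l]; case: v => [q|m] //=; rewrite inc_tr. Qed.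

Lemma adj_sym : symmetric (inc_adj f).
Proof. by case=> [p|l]; case=> [q|m]. Qed.

Lemma csym : connect_sym (inc_adj f).
Proof. exact: sym_connect_sym adj_sym. Qed.

Lemma conn_tr g h u v : connect (inc_adj f) u v ->
  connect (inc_adj f) (tr g h u) (tr g h v).
Proof.
move/connectP=> [p pp ->]; elim: p u pp => [|w p IH] u /=; first by [].
case/andP=> e1 pp; apply: connect_trans (connect1 _) (IH _ pp).
by rewrite adj_tr.
Qed.

Lemma conn_line_tr a b g h : connect (inc_adj f) (line_v 0 0) (line_v a b) ->
  connect (inc_adj f) (line_v g h) (line_v (a + g) (b + h)).
Proof. by move/(conn_tr g h); rewrite /= !add0r. Qed.

Lemma cc : connect (connect (inc_adj f)) =2 connect (inc_adj f).
Proof.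
move=> x y; apply/idP/idP.
  by apply: connect_sub => u v.
apply: connect_sub => u v h; exact: connect1 (connect1 h).
Qed.

Lemma Hs' : splits_in_two f -> n_comp (inc_adj f) (@predT (vertex G H)) = 2%N.
Proof. by rewrite /splits_in_two (eq_n_comp cc). Qed.

Lemma three_conn : splits_in_two f -> forall u v w,
  ~~ connect (inc_adj f) u v -> ~~ connect (inc_adj f) u w ->
  connect (inc_adj f) v w.
Proof.
move=> Hs u v w nuv nuw; apply/negPn/negP => nvw.
have : (3 <= n_comp (inc_adj f) (@predT (vertex G H)))%N.
  have U : uniq [:: fingraph.root (inc_adj f) u; fingraph.root (inc_adj f) v; fingraph.root (inc_adj f) w].
    by rewrite /= !inE !(root_connect csym) negb_or nuv nuw nvw.
  apply: leq_trans (_ : 3 <= #|[:: fingraph.root (inc_adj f) u; fingraph.root (inc_adj f) v; fingraph.root (inc_adj f) w]|)%N _;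
    first by rewrite (card_uniqP U).
  apply: subset_leq_card; apply/subsetP => x.
  by rewrite !inE => /or3P [] /eqP ->; rewrite roots_root //; exact: csym.
by rewrite Hs'.
Qed.

End Aux.

Theorem theorem2 (G H : finZmodType) (f : G -> H) :
  #|G| = #|H| -> ~~ odd #|G| -> (2 < #|G|)%N ->
  semi_planar f -> splits_in_two f ->
  [/\ group_set (P01 f), (#|[set: H] : P01 f|)%g = 2%N,
      P02 f = [set: H] :\: P01 f & P02 f != set0].
Proof.
Local Open Scope ring_scope.
move=> _ _ _ _ Hs.
set c := connect (inc_adj f).
have gs : group_set (P01 f).
  apply/group_setP; split; first by rewrite zmod1gE inE.
  move=> x y; rewrite !inE zmodMgE => hx hy.
  apply: connect_trans hx _.
  by have := @conn_line_tr _ _ f _ _ 0 x hy; rewrite !addr0 addrC.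
have eq2 : P02 f = [set: H] :\: P01 f by apply/setP => b; rewrite !inE andbT.
have [b0 Hb0] : exists b0, ~~ c (line_v 0 0) (line_v 0 b0).
  case: (pickP [pred b | ~~ c (line_v 0 0) (line_v 0 b)]) => [b Hb|hall].
    by exists b.
  have hall' : forall b, c (line_v 0 0) (line_v 0 b).
    by move=> b; have := hall b; rewrite /= => /negbFE.
  have lines : forall a b, c (line_v 0 0) (line_v a b).
    move=> a b.
    have h1 : c (line_v 0 0) (inl (a, f a)).
      by apply: connect1; rewrite /= /incident /= subr0 addr0.
    have h2 : c (inl (a, f a)) (line_v a (f a - f 0)).
      by apply: connect1; rewrite /= /incident /= subrr addrC subrK.
    have h3 : c (line_v a (f a - f 0)) (line_v a b).
      have := @conn_line_tr _ _ f _ _ a (f a - f 0) (hall' (b - (f a - f 0))).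
      by rewrite add0r subrK.
    exact: connect_trans h1 (connect_trans h2 h3).
  have all : forall v, c (line_v 0 0) v.
    case=> [[x y]|[a b]]; last exact: lines.
    apply: connect_trans (lines 0 (y - f x)) (connect1 _).
    by rewrite /= /incident /= subr0 addrC subrK.
  have : n_comp (inc_adj f) (@predT (vertex G H)) = 1%N.
    rewrite -(n_comp_connect (@csym _ _ f) (line_v 0 0)).
    apply: eq_n_comp_r => v; apply/idP/idP => _; [exact: all v | by []].
  by rewrite (@Hs' _ _ f Hs).
have b0in : b0 \in P02 f by rewrite inE.
have shift : P02 f = [set b + b0 | b in P01 f].
  apply/setP => b; apply/idP/imsetP.
    rewrite inE => hb; exists (b - b0); last by rewrite subrK.
    rewrite inE; have := @three_conn _ _ f Hs _ _ _ Hb0 hb.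
    by move/(@conn_tr _ _ f 0 (- b0)); rewrite /= !addr0 subrr.
  move=> [b' hb' ->]; rewrite inE; apply/negP => hc.
  move: hb'; rewrite inE => /(@conn_line_tr _ _ f _ _ 0 b0); rewrite add0r => h.
  by move/negP: Hb0; apply; apply: connect_trans hc _; rewrite csym.
have cardP : #|P02 f| = #|P01 f|.
  by rewrite shift card_imset //; exact: addIr.
have cardH : #|[set: H]| = (#|P01 f| * 2)%N.
  have : #|P02 f| = (#|[set: H]| - #|P01 f|)%N.
    by rewrite eq2 cardsD setTI.
  have := subset_leq_card (subsetT (P01 f)).
  rewrite cardP; lia.
split=> //.
  have L := Lagrange (subsetT (Group gs)); rewrite /= cardH in L.
  have pos : (0 < #|P01 f|)%N by apply/card_gt0P; exists 0; rewrite inE.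
  by apply/eqP; rewrite -(eqn_pmul2l pos) L.
by apply/set0Pn; exists b0.
Qed.
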